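(* Let $D\subseteq\{0,1,\dots,n\}$ and let $f:\mathbb{F}_2^n\to\mathbb{F}_2^n$ be a $D$-neighbor balanced bijection. Then the labeling $x\mapsto \zeta(f(x))+1$ is a $D$-magic labeling of $Q_n$.
   Context: $Q_n$ is the hypercube with vertex set $\mathbb{F}_2^n$, two vertices adjacent iff they differ in exactly one coordinate; $G_i(\boldsymbol{u})$ is the set of vertices at (Hamming) distance $i$ from $\boldsymbol{u}$ and $N_D(\boldsymbol{u})=\bigcup_{i\in D}G_i(\boldsymbol{u})$. For $\boldsymbol{a}=(a_0,\dots,a_{n-1})\in\mathbb{F}_2^n$, $\zeta(\boldsymbol{a})=\sum_{i=0}^{n-1}a_i2^i$ with $a_i\in\{0,1\}$ regarded as integers. A subset $A\subseteq\mathbb{F}_2^n$ is balanced if for every coordinate $i$, the number of $\boldsymbol{a}\in A$ with $a_i=1$ equals $|A|/2$. A bijection $f:\mathbb{F}_2^n\to\mathbb{F}_2^n$ is $D$-neighbor balanced if $f(N_D(\boldsymbol{u}))$ is balanced for every $\boldsymbol{u}\in\mathbb{F}_2^n$. A $D$-magic labeling of $Q_n$ is a bijection $g:\mathbb{F}_2^n\to\{1,\dots,2^n\}$ such that $\sum_{y\in N_D(\boldsymbol{u})}g(y)$ is the same for all $\boldsymbol{u}$. *)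

(* Defs.v *)
From mathcomp Require Import all_boot all_order.
Set Implicit Arguments. Unset Strict Implicit. Unset Printing Implicit Defensive.

(* Vertices of Q_n: vectors in F_2^n, represented as finite functions 'I_n -> bool. *)
Definition vert (n : nat) := {ffun 'I_n -> bool}.

Definition hdist n (u v : vert n) : nat := #|[set i | u i != v i]|.

Definition ND n (D : {set 'I_n.+1}) (u : vert n) : {set vert n} :=
  [set y : vert n | [exists i in D, hdist u y == (i : nat)]].

Definition zeta n (a : vert n) : nat := \sum_(i < n) (a i : nat) * 2 ^ i.

(* A is balanced: for each coordinate i, #{a in A | a_i = 1} = |A|/2
   (stated as 2 * #{...} = |A| to keep |A|/2 exact). *)
Definition balanced n (A : {set vert n}) : Prop :=
  forall i : 'I_n, 2 * #|[set a in A | a i]| = #|A|.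

Definition neighbor_balanced n (D : {set 'I_n.+1}) (f : vert n -> vert n) : Prop :=
  bijective f /\ forall u : vert n, balanced (f @: ND D u).

(* Bijectivity onto {1..2^n} is expressed as injectivity
   together with the range lying in {1..2^n} (equivalent by cardinality). *)
Definition magic_labeling n (D : {set 'I_n.+1}) (g : vert n -> nat) : Prop :=
  [/\ injective g,
      (forall x, 1 <= g x <= 2 ^ n) &
      exists c, forall u : vert n, \sum_(y in ND D u) g y = c].

(* Main.v *)
Require Import Defs.
From mathcomp Require Import all_boot all_order.
From mathcomp Require Import zify.
Local Open Scope nat_scope.
Set Implicit Arguments. Unset Strict Implicit.

Definition tailv n (a : vert n.+1) : vert n := [ffun i => a (lift ord0 i)].

Lemma zetaS n (a : vert n.+1) : zeta a = a ord0 + 2 * zeta (tailv a).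
Proof.
rewrite /zeta big_ord_recl expn0 muln1; congr (_ + _).
rewrite big_distrr; apply: eq_bigr => i _ /=.
by rewrite ffunE /bump /= add1n expnS mulnCA.
Qed.

Lemma zeta_lt n (a : vert n) : zeta a < 2 ^ n.
Proof.
elim: n a => [|n IH] a; first by rewrite /zeta big_ord0.
rewrite zetaS expnS; have := IH (tailv a); case: (a ord0) => /=; lia.
Qed.

Lemma zeta_inj n : injective (@zeta n).
Proof.
elim: n => [|n IH] a b.
  by move=> _; apply/ffunP => -[].
rewrite !zetaS => e.
have e0 : a ord0 = b ord0.
  move: e; case: (a ord0); case: (b ord0) => //= e; lia.
rewrite e0 in e; have /IH et : zeta (tailv a) = zeta (tailv b) by lia.
apply/ffunP => i; case: (unliftP ord0 i) => [j ->|->] //.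
by have := congr1 (fun g : vert n => g j) et; rewrite /= !ffunE.
Qed.

Definition tr n (w y : vert n) : vert n := [ffun i => w i (+) y i].

Lemma tr_inj n (w : vert n) : injective (tr w).
Proof.
move=> a b e; apply/ffunP => i; have := congr1 (fun g : vert n => g i) e.
by rewrite /= !ffunE; case: (w i); case: (a i); case: (b i).
Qed.

Lemma hdist_tr n (w u y : vert n) : hdist (tr w u) (tr w y) = hdist u y.
Proof.
rewrite /hdist; apply: eq_card => i; rewrite !inE !ffunE.
by case: (w i); case: (u i); case: (y i).
Qed.

Lemma ND_tr n D (w u : vert n) : ND D (tr w u) = tr w @: ND D u.
Proof.
apply/setP => y.
have -> : y = tr w (tr w y).
  by apply/ffunP => i; rewrite !ffunE; case: (w i); case: (y i).
rewrite mem_imset; last exact: tr_inj.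
by rewrite !inE; apply: eq_existsb => i; rewrite hdist_tr.
Qed.

Lemma card_ND n D (u : vert n) : #|ND D u| = #|ND D [ffun=> false]|.
Proof.
have -> : u = tr u [ffun=> false].
  by apply/ffunP => i; rewrite !ffunE; case: (u i).
by rewrite ND_tr card_imset //; exact: tr_inj.
Qed.

Lemma sum_zeta n (A : {set vert n}) :
  2 * \sum_(z in A) zeta z = \sum_(i < n) 2 ^ i * (2 * #|[set a in A | a i]|).
Proof.
rewrite /zeta (exchange_big) big_distrr /=; apply: eq_bigr => i _.
rewrite -big_distrl /= mulnCA mulnC -mulnA mulnCA; congr (_ * (_ * _)).
rewrite -sum1_card big_mkcond /= [RHS]big_mkcond /=; apply: eq_bigr => z _.
by rewrite inE; case: (z \in A); case: (z i).
Qed.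

Theorem lemma3p5 (n : nat) (D : {set 'I_n.+1}) (f : vert n -> vert n) :
  neighbor_balanced D f ->
  magic_labeling D (fun x => zeta (f x) + 1).
Proof.
move=> [fbij bal]; have finj := bij_inj fbij.
split.
- by move=> x y /addIn /zeta_inj /finj.
- by move=> x; have := zeta_lt (f x); lia.
set c := fun u : vert n => \sum_(y in ND D u) (zeta (f y) + 1).
exists (c [ffun=> false]) => u.
have key : forall v, 2 * c v = \sum_(i < n) 2 ^ i * #|ND D [ffun=> false]|
                               + 2 * #|ND D [ffun=> false]|.
  move=> v; rewrite /c big_split /= sum1_card -(big_imset (@zeta n) (in2W finj)) /=.
  rewrite mulnDr sum_zeta -(card_ND D v); congr (_ + _).
  by apply: eq_bigr => i _; rewrite bal card_imset.
apply/eqP; rewrite -(eqn_pmul2l (isT : 0 < 2)) key key //.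
Qed.
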